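(* Let $G$ and $K$ be convex bodies in $\mathbb{R}^d$ with $O\in\operatorname{int}(G)$ and $G\subset\operatorname{int}(K)$. Let $\alpha>0$ and $G_+:=\{y\in\operatorname{int}(K):\inf_{g\in G}d_K(y,g)\le\alpha\}$. Then for all $p,x\in K^\circ$, $$d_{(G_+)^\circ}(p,x)\le d_{G^\circ}(p,x)+2\alpha.$$ In particular, if $d_{G^\circ}(p,x)\le\alpha$ then $d_{(G_+)^\circ}(p,x)\le3\alpha$.
   Context: Polar $X^\circ=\{y:\langle w,y\rangle\le1\ \forall w\in X\}$. For a convex body $E$ and distinct $u,v\in\operatorname{int}(E)$, let $v'$ (resp. $u'$) be where the ray from $u$ through $v$ (resp. from $v$ through $u$) meets $\partial E$; the Hilbert distance is $d_E(u,v)=\frac12\ln\left(\frac{\|v-u'\|}{\|u-u'\|}\frac{\|u-v'\|}{\|v-v'\|}\right)$, $d_E(u,u)=0$. *)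

(* Defs.v *)
From HB Require Import structures.
From mathcomp Require Import all_boot all_order all_algebra.
From mathcomp Require Import all_classical all_reals all_analysis.
Set Implicit Arguments. Unset Strict Implicit. Unset Printing Implicit Defensive.
Import Order.TTheory GRing.Theory Num.Theory.
Import numFieldNormedType.Exports.
Local Open Scope classical_set_scope.
Local Open Scope ring_scope.

Section Defs.
Variables (R : realType) (d : nat).
Local Notation V := 'rV[R]_d.

Definition dotp (w y : V) : R := \sum_(i < d) w ord0 i * y ord0 i.

Definition enorm (x : V) : R := Num.sqrt (dotp x x).

Definition convex_set (E : set V) : Prop :=
  forall x y, E x -> E y -> forall t : R, 0 <= t -> t <= 1 ->
    E (t *: x + (1 - t) *: y).

Definition convex_body (E : set V) : Prop :=
  convex_set E /\ compact E /\ (interior E !=set0).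

Definition polar (X : set V) : set V :=
  [set y | forall w, X w -> dotp w y <= 1].

Definition bdry (E : set V) : set V := closure E `\` interior E.

Definition ray_exit (E : set V) (u v : V) : V :=
  xget u [set w | exists t : R, 0 <= t /\ w = u + t *: (v - u) /\ bdry E w].

Definition hilbert_dist (E : set V) (u v : V) : R :=
  if u == v then 0 else
  let v' := ray_exit E u v in
  let u' := ray_exit E v u in
  (ln ((enorm (v - u') / enorm (u - u')) * (enorm (u - v') / enorm (v - v'))))
  / 2.

End Defs.

(* Main.v *)
Require Import Defs.
From HB Require Import structures.
From mathcomp Require Import all_boot all_order all_algebra.
From mathcomp Require Import all_classical all_reals all_analysis.
From mathcomp Require Import ring lra.
Import Order.TTheory GRing.Theory Num.Theory.
Import numFieldNormedType.Exports.
Local Open Scope classical_set_scope.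
Local Open Scope ring_scope.
Section Basics.
Set Implicit Arguments. Unset Strict Implicit.
Variables (R : realType) (d : nat).
Local Notation V := 'rV[R]_d.
Implicit Types (w y z : V).

Lemma dotpC w y : dotp w y = dotp y w.
Proof. by rewrite /dotp; apply: eq_bigr => i _; rewrite mulrC. Qed.

Lemma dotpDr w y z : dotp w (y + z) = dotp w y + dotp w z.
Proof. by rewrite /dotp -big_split /=; apply: eq_bigr => i _; rewrite mxE mulrDr. Qed.

Lemma dotpZr w c y : dotp w (c *: y) = c * dotp w y.
Proof. by rewrite /dotp mulr_sumr; apply: eq_bigr => i _; rewrite mxE mulrCA. Qed.

Lemma dotpNr w y : dotp w (- y) = - dotp w y.
Proof. by rewrite -scaleN1r dotpZr mulN1r. Qed.

Lemma dotpBr w y z : dotp w (y - z) = dotp w y - dotp w z.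
Proof. by rewrite dotpDr dotpNr. Qed.

Lemma dotpDl w y z : dotp (y + z) w = dotp y w + dotp z w.
Proof. by rewrite dotpC dotpDr -!(dotpC w). Qed.

Lemma dotpZl w c y : dotp (c *: y) w = c * dotp y w.
Proof. by rewrite dotpC dotpZr dotpC. Qed.

Lemma dotpBl w y z : dotp (y - z) w = dotp y w - dotp z w.
Proof. by rewrite dotpC dotpBr -!(dotpC w). Qed.

Lemma dotp_ge0 y : 0 <= dotp y y.
Proof. by rewrite /dotp; apply: sumr_ge0 => i _; rewrite -expr2 sqr_ge0. Qed.

Lemma dotp_gt0 y : y != 0 -> 0 < dotp y y.
Proof.
move=> y0; rewrite lt_neqAle dotp_ge0 andbT eq_sym; apply/negP => /eqP H.
move/eqP: y0; apply; apply/rowP => i; rewrite mxE.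
rewrite /dotp in H.
have := psumr_eq0P (fun i _ => (sqr_ge0 (y ord0 i) : 0 <= y ord0 i * y ord0 i)) H.
by move=> /(_ i isT) /eqP; rewrite -expr2 sqrf_eq0 => /eqP.
Qed.

Lemma coord_le y i : `|y ord0 i| <= `|y|.
Proof.
rewrite (_ : `|y| = mx_norm y) // mx_normrE; apply/bigmax_geP; right => /=.
by exists (ord0, i).
Qed.

Lemma dotp_bound w y : `|dotp w y| <= (\sum_i `|w ord0 i|) * `|y|.
Proof.
rewrite /dotp mulr_suml; apply: le_trans (ler_norm_sum _ _ _) _.
apply: ler_sum => i _; rewrite normrM; apply: ler_wpM2l => //; exact: coord_le.
Qed.

Lemma enormZ c y : enorm (c *: y) = `|c| * enorm y.
Proof.
by rewrite /enorm dotpZr dotpZl mulrA -expr2 sqrtrM ?sqr_ge0 // sqrtr_sqr.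
Qed.

Lemma enorm_gt0 y : y != 0 -> 0 < enorm y.
Proof. by move=> y0; rewrite /enorm sqrtr_gt0 dotp_gt0. Qed.

Lemma interiorP (A : set V) x :
  interior A x <-> exists2 e, 0 < e & forall y, `|x - y| < e -> A y.
Proof.
rewrite /interior /=; split.
  by move=> /nbhs_ballP [e e0 H]; exists e => // y xy; apply: H; rewrite -ball_normE.
by move=> [e e0 H]; apply/nbhs_ballP; exists e => // y; rewrite -ball_normE; apply: H.
Qed.

Lemma closureP (A : set V) x :
  (forall e, 0 < e -> exists y, A y /\ `|x - y| < e) -> closure A x.
Proof.
move=> H B /nbhs_ballP [e e0 Hb]; have [y [Ay xy]] := H e e0.
by exists y; split => //; apply: Hb; rewrite -ball_normE.
Qed.

Lemma not_closureP (A : set V) x e : 0 < e ->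
  (forall y, `|x - y| < e -> ~ A y) -> ~ closure A x.
Proof.
move=> e0 H /(_ (ball x e)) []; first by apply/nbhs_ballP; exists e.
by move=> y [Ay]; rewrite -ball_normE => /H.
Qed.

End Basics.
Section KPart.
Set Implicit Arguments. Unset Strict Implicit.
Variables (R : realType) (d : nat).
Local Notation V := 'rV[R]_d.

Lemma convex_interior (K : set V) a b t : Defs.convex_set K -> interior K a ->
  interior K b -> 0 <= t -> t <= 1 -> interior K (a + t *: (b - a)).
Proof.
move=> cK /interiorP [ea ea0 Ha] /interiorP [eb eb0 Hb] t0 t1.
apply/interiorP; exists (Num.min ea eb); first by rewrite lt_min ea0 eb0.
move=> y; rewrite lt_min => /andP [ya yb].
set h := y - (a + t *: (b - a)).
have -> : y = t *: (b + h) + (1 - t) *: (a + h).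
  by apply/rowP => i; rewrite /h !mxE; ring.
apply: (cK (b + h) (a + h) _ _ t t0 t1).
  apply: Hb; rewrite opprD addrA subrr add0r normrN /h distrC; exact: (lt_le_trans yb).
apply: Ha; rewrite opprD addrA subrr add0r normrN /h distrC; exact: (lt_le_trans ya).
Qed.

Lemma exit_K (K : set V) a b : Defs.convex_set K -> compact K -> interior K a ->
  interior K b -> a != b ->
  exists t, 1 < t /\ ray_exit K a b = a + t *: (b - a) /\ K (ray_exit K a b).
Proof.
move=> cK kK ia ib ab.
have clK : closed K := compact_closed (@norm_hausdorff _ _) kK.
have [M [Mr HM]] := compact_bounded kK.
have M1 : forall y, K y -> `|y| <= `|M| + 1.
  move=> y Ky; apply: (HM (`|M|+1)) => //.
  by apply: (le_lt_trans (real_ler_norm Mr)); rewrite ltrDl.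
set u := b - a.
have u0 : 0 < `|u| by rewrite normr_gt0 subr_eq0 eq_sym.
set A := [set t : R | 0 <= t /\ K (a + t *: u)].
have A0 : A 0 by split => //; rewrite scale0r addr0; exact: interior_subset.
have Aub : forall t, A t -> t <= (`|M| + 1 + `|a|) / `|u|.
  move=> t [t0 Kt]; rewrite ler_pdivlMr //.
  have : `|t *: u| <= `|a + t*:u| + `|a|.
    by rewrite -{1}(addKr a (t *: u)) addrC; exact: ler_normB.
  rewrite normrZ ger0_norm // => H; have := M1 _ Kt; lra.
have hsA : has_sup A by split; [exists 0 | exists ((`|M|+1+`|a|)/`|u|) => t /Aub].
set T := sup A.
have T0 : 0 <= T := sup_upper_bound hsA A0.
have bdT : bdry K (a + T *: u).
  split.
  - apply: closureP => e e0.
    have eu0 : 0 < e / `|u| by rewrite divr_gt0.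
    have [t At Tt] := sup_adherent eu0 hsA.
    exists (a + t *: u); split; first by case: At.
    have tT : t <= T := sup_upper_bound hsA At.
    have -> : a + T *: u - (a + t *: u) = (T - t) *: u.
      by apply/rowP => i; rewrite !mxE; ring.
    rewrite normrZ ger0_norm ?subr_ge0 // -ltr_pdivlMr //; rewrite -/T in Tt; lra.
  - move=> /interiorP [e e0 He].
    set eta := e / (2 * `|u|).
    have eta0 : 0 < eta by rewrite divr_gt0 // mulr_gt0.
    have : A (T + eta).
      split; first lra.
      apply: He.
      have -> : a + T *: u - (a + (T + eta) *: u) = (- eta) *: u.
        by apply/rowP => i; rewrite !mxE; ring.
      rewrite normrZ normrN gtr0_norm //.
      have -> : eta * `|u| = e / 2.
        by rewrite /eta; field; rewrite ?gt_eqF // ?mulr_gt0 ?pnatr_eq0.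
      lra.
    move/(sup_upper_bound hsA) => /=; rewrite -/T; lra.
have ex : exists y, [set w | exists t : R, 0 <= t /\ w = a + t *: (b - a) /\ bdry K w] y.
  by exists (a + T *: u); exists T.
have := xgetPex a ex; rewrite /ray_exit; set z := xget _ _.
move=> [t [t0 [zE [clz niz]]]].
exists t; split; [| split => //].
  rewrite ltNge; apply/negP => t1; apply: niz; rewrite zE; exact: convex_interior.
by rewrite ((closure_id K).1 clK).
Qed.

End KPart.
Section KRatio.
Set Implicit Arguments. Unset Strict Implicit.
Variables (R : realType) (d : nat).
Local Notation V := 'rV[R]_d.

Lemma vec_id1 (u v : V) (s : R) : v - (v + s *: (u - v)) = (- s) *: (u - v).
Proof. by apply/rowP => i; rewrite !mxE; ring. Qed.

Lemma vec_id2 (u v : V) (s : R) : u - (v + s *: (u - v)) = (1 - s) *: (u - v).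
Proof. by apply/rowP => i; rewrite !mxE; ring. Qed.

Lemma ratio_s (s E : R) : 1 < s -> 0 < E ->
  `|- s| * E / (`|1 - s| * E) = s / (s - 1).
Proof.
move=> s1 E0; rewrite normrN (gtr0_norm (lt_trans ltr01 s1)) ltr0_norm ?subr_lt0 //.
rewrite opprB; field; rewrite ?gt_eqF // subr_gt0 //.
Qed.

Lemma dK_ratio (K : set V) w g : Defs.convex_set K -> compact K ->
  interior K w -> interior K g ->
  exists r1 r2 : R, 1 <= r1 /\ 1 <= r2 /\ r1 * r2 = expR (2 * hilbert_dist K w g) /\
   forall q, polar K q -> 1 - dotp g q <= r1 * (1 - dotp w q) /\
                          1 - dotp w q <= r2 * (1 - dotp g q).
Proof.
move=> cK kK iw ig.
have [->|wg] := eqVneq w g.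
  exists 1, 1; rewrite /hilbert_dist eqxx mulr0 expR0 mulr1; do 3 split => //.
  by move=> q _; rewrite !mul1r.
have [t [t1 [vE Kv]]] := exit_K cK kK iw ig wg.
have gw : g != w by rewrite eq_sym.
have [s [s1 [uE Ku]]] := exit_K cK kK ig iw gw.
have s0 : 0 < s - 1 by rewrite subr_gt0.
have t0 : 0 < t - 1 by rewrite subr_gt0.
have r1g : 1 <= s / (s - 1) by rewrite ler_pdivlMr // mul1r; lra.
have r2g : 1 <= t / (t - 1) by rewrite ler_pdivlMr // mul1r; lra.
exists (s / (s - 1)), (t / (t - 1)); do 2 split => //.
have E1 : 0 < enorm (w - g) by apply: enorm_gt0; rewrite subr_eq0.
have E2 : 0 < enorm (g - w) by apply: enorm_gt0; rewrite subr_eq0.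
split.
  rewrite /hilbert_dist (negbTE wg) /= uE vE vec_id1 vec_id2 vec_id1 vec_id2 !enormZ.
  rewrite !ratio_s //.
  have -> : forall y : R, 2 * (y / 2) = y by move=> y; field.
  rewrite lnK // posrE mulr_gt0 //.
    exact: divr_gt0 (lt_trans ltr01 s1) s0.
  exact: divr_gt0 (lt_trans ltr01 t1) t0.
rewrite uE in Ku; rewrite vE in Kv.
move=> q Kq; have := Kq _ Ku; have := Kq _ Kv.
rewrite !dotpDl !dotpZl !dotpBl => H1 H2; split.
  rewrite mulrAC ler_pdivlMr //; nra.
rewrite mulrAC ler_pdivlMr //; nra.
Qed.

End KRatio.
Section PolarPart.
Set Implicit Arguments. Unset Strict Implicit.
Variables (R : realType) (d : nat).
Local Notation V := 'rV[R]_d.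

Definition fr (p x w : V) : R := (1 - dotp w x) / (1 - dotp w p).
Definition mm (X : set V) (p x : V) : R := inf [set fr p x w | w in X].

Lemma div_le (a b c e : R) : 0 < c -> 0 < b -> b <= c -> 0 < e -> e <= a ->
  e / c <= a / b.
Proof.
move=> c0 b0 bc e0 ea; rewrite ler_pdivrMr // mulrAC ler_pdivlMr //; nra.
Qed.

Lemma zform (p x w : V) t : (1 - dotp w p) != 0 ->
  1 - dotp w (p + t *: (x - p)) = (1 - dotp w p) * (1 - t + t * fr p x w).
Proof. by move=> H; rewrite /fr dotpDr dotpZr dotpBr; field. Qed.

Lemma polar_exit (X : set V) (B r dp dx : R) p x :
  0 < B -> (forall w y, X w -> `|dotp w y| <= B * `|y|) ->
  0 < r -> (forall w, `|w| < r -> X w) ->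
  0 < dp -> (forall w, X w -> dp <= 1 - dotp w p) ->
  0 < dx -> (forall w, X w -> dx <= 1 - dotp w x) ->
  p != x ->
  0 < mm X p x /\ mm X p x < 1 /\
  ray_exit (polar X) p x = p + (1 - mm X p x)^-1 *: (x - p).
Proof.
move=> B0 HB r0 Hr dp0 Hdp dx0 Hdx px.
set S := [set fr p x w | w in X].
have -> : mm X p x = inf S by [].
set m := inf S.
have X0 : X 0 by apply: Hr; rewrite normr0.
have fpb : forall w, X w -> 1 - dotp w p <= 1 + B * `|p|.
  by move=> w Xw; have := HB w p Xw; rewrite ler_norml => /andP[h1 h2]; lra.
have Bp0 : 0 < 1 + B * `|p| by have := normr_ge0 p; nra.
have lbS : lbound S (dx / (1 + B * `|p|)).
  move=> _ [w Xw <-]; rewrite /fr; apply: div_le => //.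
  - exact: lt_le_trans dp0 (Hdp _ Xw).
  - exact: fpb.
  - exact: Hdx.
have S0 : S !=set0 by exists (fr p x 0), 0.
have hinf : has_inf S by split => //; exists (dx / (1 + B * `|p|)).
have m_gt0 : 0 < m.
  apply: lt_le_trans (lb_le_inf S0 lbS); exact: divr_gt0.
have m_le : forall w, X w -> m <= fr p x w.
  by move=> w Xw; apply: (ge_inf hinf.2); exists w.
have fp0 : forall w, X w -> 0 < 1 - dotp w p.
  by move=> w Xw; exact: lt_le_trans dp0 (Hdp _ Xw).
have xp0 : 0 < `|x - p| by rewrite normr_gt0 subr_eq0 eq_sym.
have m_lt1 : m < 1.
  set c := r / (2 * `|x - p|).
  have c0 : 0 < c by rewrite divr_gt0 // mulr_gt0.
  have Xw0 : X (c *: (x - p)).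
    apply: Hr; rewrite normrZ gtr0_norm //.
    have -> : c * `|x - p| = r / 2.
      by rewrite /c; field; rewrite ?gt_eqF // ?mulr_gt0 ?pnatr_eq0.
    lra.
  apply: le_lt_trans (m_le _ Xw0) _.
  rewrite /fr ltr_pdivrMr ?fp0 // mul1r.
  have : 0 < dotp (c *: (x - p)) (x - p) by rewrite dotpZl mulr_gt0 // dotp_gt0 // subr_eq0 eq_sym.
  rewrite dotpBr; lra.
do 2 split => //.
set T := (1 - m)^-1.
have T0 : 0 < T by rewrite invr_gt0 subr_gt0.
have Tm : T * (1 - m) = 1 by rewrite mulVf // gt_eqF // subr_gt0.
have T1 : 1 < T by have := mulr_gt0 T0 m_gt0; nra.
set z := fun t => p + t *: (x - p).
have zf : forall w t, X w -> 1 - dotp w (z t) = (1 - dotp w p) * (1 - t + t * fr p x w).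
  by move=> w t Xw; apply: zform; rewrite gt_eqF // fp0.
have inT : forall t, 0 <= t -> t <= T -> polar X (z t).
  move=> t t0 tT w Xw; rewrite -subr_ge0 zf //.
  apply: mulr_ge0; first exact: ltW (fp0 _ Xw).
  have := m_le _ Xw; nra.
have intT : forall t, 0 <= t -> t < T -> interior (polar X) (z t).
  move=> t t0 tT; apply/interiorP.
  set del := dp * (1 - t * (1 - m)).
  have del0 : 0 < del by apply: mulr_gt0 => //; nra.
  exists (del / B); first exact: divr_gt0.
  move=> y zy w Xw.
  have h1 : del <= 1 - dotp w (z t).
    rewrite zf // /del; apply: ler_pM.
    - exact: ltW.
    - by have := del0; rewrite /del pmulr_rgt0 // => /ltW.
    - exact: Hdp.
    - have := m_le _ Xw; nra.
  have h2 : `|dotp w (z t - y)| <= B * `|z t - y| by exact: HB.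
  have h3 : B * `|z t - y| < del by rewrite mulrC -ltr_pdivlMr.
  rewrite dotpBr in h2; move: h2; rewrite ler_norml => /andP[h4 h5]; lra.
have nclT : forall t, T < t -> ~ closure (polar X) (z t).
  move=> t Tt.
  have t0 : 0 < t by exact: lt_trans T0 Tt.
  have ti : t^-1 < 1 - m by rewrite -[1 - m]invrK -/T ltf_pV2 ?posrE.
  have eps0 : 0 < 1 - t^-1 - m by lra.
  have [_ [w Xw <-] fw] := inf_adherent eps0 hinf.
  rewrite -/m in fw.
  have tt : t * t^-1 = 1 by rewrite mulfV // gt_eqF.
  set gam := 1 - dotp w (z t).
  have gam0 : gam < 0.
    rewrite /gam zf // pmulr_rlt0 ?fp0 //; nra.
  apply: (@not_closureP _ _ _ _ (- gam / B)); first by rewrite divr_gt0 // oppr_gt0.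
  move=> y zy Py; have := Py w Xw.
  have h2 : `|dotp w (z t - y)| <= B * `|z t - y| by exact: HB.
  have h3 : B * `|z t - y| < - gam by rewrite mulrC -ltr_pdivlMr.
  rewrite dotpBr in h2; move: h2; rewrite ler_norml => /andP[h4 h5].
  rewrite /gam in h3; lra.
have bdT : bdry (polar X) (z T).
  split; first by apply: subset_closure; apply: inT => //; exact: ltW.
  move=> /interiorP [e e0 He].
  set eta := e / (2 * `|x - p|).
  have eta0 : 0 < eta by rewrite divr_gt0 // mulr_gt0.
  have Pz : polar X (z (T + eta)).
    apply: He; rewrite /z.
    have -> : p + T *: (x - p) - (p + (T + eta) *: (x - p)) = (- eta) *: (x - p).
      by apply/rowP => i; rewrite !mxE; ring.
    rewrite normrZ normrN gtr0_norm //.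
    have -> : eta * `|x - p| = e / 2.
      by rewrite /eta; field; rewrite ?gt_eqF // ?mulr_gt0 ?pnatr_eq0.
    lra.
  set s := T + eta.
  have s0 : 0 < s by rewrite /s; lra.
  have ss : s * s^-1 = 1 by rewrite mulfV // gt_eqF.
  have si0 : 0 < s^-1 by rewrite invr_gt0.
  have lb2 : lbound S (1 - s^-1).
    move=> _ [w Xw <-]; have := Pz w Xw; rewrite -subr_ge0 zf //.
    rewrite pmulr_rge0 ?fp0 // => H.
    have := mulr_ge0 (ltW si0) H.
    rewrite mulrDr mulrBr mulr1 mulrA mulVf ?gt_eqF // mul1r; lra.
  have := lb_le_inf S0 lb2; rewrite -/m => H.
  have : T^-1 <= s^-1 by rewrite /T invrK; lra.
  rewrite lef_pV2 ?posrE // /s; lra.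
rewrite /ray_exit; apply: xget_unique; first by exists T; split => //; exact: ltW.
move=> y [t [t0 [-> [cly niy]]]].
have [tT|Tt|->] := ltgtP t T.
- by exfalso; apply: niy; apply: intT.
- by exfalso; apply: (nclT t Tt).
- by [].
Qed.

End PolarPart.
Section HilbertPolar.
Set Implicit Arguments. Unset Strict Implicit.
Variables (R : realType) (d : nat).
Local Notation V := 'rV[R]_d.

Lemma Sratio (m : R) : 0 < m -> m < 1 ->
  1 < (1 - m)^-1 /\ (1 - m)^-1 / ((1 - m)^-1 - 1) = m^-1.
Proof.
move=> m0 m1; split.
  by rewrite invf_gt1 ?subr_gt0 //; lra.
field; rewrite ?gt_eqF //; try lra.
Qed.

Lemma hilbert_polar (X : set V) (B r dp dx : R) p x :
  0 < B -> (forall w y, X w -> `|dotp w y| <= B * `|y|) ->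
  0 < r -> (forall w, `|w| < r -> X w) ->
  0 < dp -> (forall w, X w -> dp <= 1 - dotp w p) ->
  0 < dx -> (forall w, X w -> dx <= 1 - dotp w x) ->
  p != x ->
  0 < mm X p x /\ 0 < mm X x p /\
  hilbert_dist (polar X) p x = - (ln (mm X p x) + ln (mm X x p)) / 2.
Proof.
move=> B0 HB r0 Hr dp0 Hdp dx0 Hdx px.
have [m0 [m1 vE]] := polar_exit B0 HB r0 Hr dp0 Hdp dx0 Hdx px.
have xp : x != p by rewrite eq_sym.
have [m0' [m1' uE]] := polar_exit B0 HB r0 Hr dx0 Hdx dp0 Hdp xp.
do 2 split => //.
rewrite /hilbert_dist (negbTE px) /= uE vE vec_id1 vec_id2 vec_id1 vec_id2 !enormZ.
have [S1 SE] := Sratio m0' m1'.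
have [T1 TE] := Sratio m0 m1.
have E1 : 0 < enorm (p - x) by apply: enorm_gt0; rewrite subr_eq0.
have E2 : 0 < enorm (x - p) by apply: enorm_gt0; rewrite subr_eq0.
rewrite !ratio_s // SE TE lnM ?posrE ?invr_gt0 // !lnV ?posrE //.
by rewrite opprD addrC.
Qed.

End HilbertPolar.
Section MainHelpers.
Set Implicit Arguments. Unset Strict Implicit.
Variables (R : realType) (d : nat).
Local Notation V := 'rV[R]_d.

Lemma dotpr0 (w : V) : dotp w 0 = 0.
Proof. by rewrite /dotp big1 // => i _; rewrite mxE mulr0. Qed.

Lemma fpos (K : set V) g q : interior K g -> polar K q -> 0 < 1 - dotp g q.
Proof.
move=> /interiorP [e e0 He] Kq.
have [->|q0] := eqVneq q 0; first by rewrite dotpr0 subr0.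
have qn : 0 < `|q| by rewrite normr_gt0.
set c := e / (2 * `|q|).
have c0 : 0 < c by rewrite divr_gt0 // mulr_gt0.
have : K (g + c *: q).
  apply: He; rewrite opprD addrA subrr add0r normrN normrZ gtr0_norm //.
  have -> : c * `|q| = e / 2 by rewrite /c; field; rewrite ?gt_eqF // ?mulr_gt0 ?pnatr_eq0.
  lra.
move/Kq; rewrite dotpDl dotpZl.
have := dotp_gt0 q0; rewrite subr_gt0 => h1 h2.
have := mulr_gt0 c0 h1; lra.
Qed.

Lemma cont_f (q : V) : continuous (fun w : V => 1 - dotp w q).
Proof.
move=> w; apply/(@cvgrPdist_lt _ _ _ (nbhs w) (nbhs_filter w)) => e e0.
set C := \sum_i `|q ord0 i| + 1.
have C0 : 0 < C by rewrite /C ltr_wpDl // sumr_ge0.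
apply/nbhs_ballP; exists (e / C); first by rewrite /= divr_gt0.
move=> y; rewrite -ball_normE /= => wy.
have -> : 1 - dotp w q - (1 - dotp y q) = dotp q (y - w).
  by rewrite dotpBr !(dotpC q); ring.
apply: le_lt_trans (dotp_bound _ _) _.
rewrite distrC; apply: (@le_lt_trans _ _ (C * `|w - y|)).
  by apply: ler_wpM2r => //; rewrite /C lerDl.
by rewrite mulrC -ltr_pdivlMr.
Qed.

Lemma gmin (G K : set V) q : G !=set0 -> compact G -> G `<=` interior K ->
  polar K q -> exists2 del, 0 < del & forall g, G g -> del <= 1 - dotp g q.
Proof.
move=> G0 kG GK Kq.
have cf : {within G, continuous (fun w : V => 1 - dotp w q)}.
  by apply: continuous_subspaceT; exact: cont_f.
have [c cG Hc] := EVT_min_rV G0 kG cf.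
exists (1 - dotp c q); first by apply: (fpos (GK _ (set_mem cG))).
by move=> g Gg; apply: Hc; rewrite inE.
Qed.

Lemma Kbound (K : set V) : compact K ->
  exists2 B, 0 < B & forall w y, K w -> `|dotp w y| <= B * `|y|.
Proof.
move=> kK; have [M [Mr HM]] := compact_bounded kK.
set M1 := `|M| + 1.
have HM1 : forall y, K y -> `|y| <= M1.
  move=> y Ky; apply: (HM M1) => //.
  by apply: (le_lt_trans (real_ler_norm Mr)); rewrite ltrDl.
have M10 : 0 < M1 by rewrite /M1 ltr_wpDl.
exists (\sum_(i < d) M1 + 1); first by rewrite ltr_wpDl // sumr_ge0 // => i _; exact: ltW.
move=> w y Kw; apply: le_trans (dotp_bound _ _) _.
apply: ler_wpM2r => //; apply: (@le_trans _ _ (\sum_(i < d) M1)); last by rewrite lerDl.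
apply: ler_sum => i _; apply: le_trans (coord_le _ _) _; exact: HM1.
Qed.

Lemma dist_ge0 (K : set V) w g : Defs.convex_set K -> compact K ->
  interior K w -> interior K g -> 0 <= hilbert_dist K w g.
Proof.
move=> cK kK iw ig; have [r1 [r2 [r1g [r2g [E _]]]]] := dK_ratio cK kK iw ig.
have : expR 0 <= expR (2 * hilbert_dist K w g).
  by rewrite -E expR0; nra.
rewrite ler_expR; lra.
Qed.

End MainHelpers.
Section Key.
Set Implicit Arguments. Unset Strict Implicit.
Variables (R : realType) (d : nat).
Local Notation V := 'rV[R]_d.

Lemma key_ln (G K : set V) (alpha : R) q1 q2 w :
  Defs.convex_set K -> compact K -> G `<=` interior K ->
  polar K q1 -> polar K q2 -> 0 < mm G q1 q2 -> G !=set0 ->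
  interior K w -> inf [set hilbert_dist K w g | g in G] <= alpha ->
  ln (mm G q1 q2) - 2 * alpha <= ln (fr q1 q2 w).
Proof.
move=> cK kK GK K1 K2 m0 G0 iw Hinf.
apply/ler_addgt0Pr => e e0.
set Sw := [set hilbert_dist K w g | g in G].
have hw : has_inf Sw.
  split; first by case: G0 => g Gg; exists (hilbert_dist K w g), g.
  by exists 0 => _ [g Gg <-]; apply: dist_ge0 => //; exact: GK.
have e20 : 0 < e / 2 by rewrite divr_gt0.
have [_ [g Gg <-] Hg] := inf_adherent e20 hw.
have ig := GK g Gg.
have [r1 [r2 [r1g [r2g [E H]]]]] := dK_ratio cK kK iw ig.
have [h11 h12] := H q1 K1; have [h21 h22] := H q2 K2.
have f1w := fpos iw K1; have f2w := fpos iw K2.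
have f1g := fpos ig K1; have f2g := fpos ig K2.
have r10 : 0 < r1 by lra.
have r20 : 0 < r2 by lra.
have frg : mm G q1 q2 <= fr q1 q2 g.
  apply: (ge_inf _); last by exists g.
  exists 0 => _ [g' Gg' <-]; rewrite /fr ltW // divr_gt0 //; apply: fpos; [exact: GK|by []|exact: GK|by []].
have frg0 : 0 < fr q1 q2 g by rewrite /fr divr_gt0.
have frw0 : 0 < fr q1 q2 w by rewrite /fr divr_gt0.
have step : fr q1 q2 g / (r1 * r2) <= fr q1 q2 w.
  have -> : fr q1 q2 g / (r1 * r2) = ((1 - dotp g q2) / r1) / (r2 * (1 - dotp g q1)).
    by rewrite /fr; field; rewrite ?gt_eqF.
  rewrite /fr; apply: div_le => //.
  - exact: mulr_gt0.
  - exact: divr_gt0.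
  - by rewrite ler_pdivrMr // mulrC.
have L1 : ln (fr q1 q2 g / (r1 * r2)) <= ln (fr q1 q2 w).
  by rewrite ler_ln ?posrE // divr_gt0 // mulr_gt0.
have L2 : ln (fr q1 q2 g / (r1 * r2)) = ln (fr q1 q2 g) - 2 * hilbert_dist K w g.
  have P1 : fr q1 q2 g \in Num.pos by rewrite posrE.
  have P2 : (r1 * r2)^-1 \in Num.pos by rewrite posrE invr_gt0 mulr_gt0.
  have P3 : r1 * r2 \in Num.pos by rewrite posrE mulr_gt0.
  by rewrite (lnM P1 P2) (lnV P3) E expRK.
have L3 : ln (mm G q1 q2) <= ln (fr q1 q2 g) by rewrite ler_ln ?posrE.
rewrite -/Sw in Hinf; lra.
Qed.

End Key.
Theorem lemma4p4 (R : realType) (d : nat) (G K : set 'rV[R]_d) (alpha : R) :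
  convex_body G -> convex_body K ->
  interior G 0 -> G `<=` interior K -> 0 < alpha ->
  let Gplus := [set y | interior K y /\
                  inf [set hilbert_dist K y g | g in G] <= alpha] in
  forall p x, polar K p -> polar K x ->
    hilbert_dist (polar Gplus) p x <= hilbert_dist (polar G) p x + 2 * alpha /\
    (hilbert_dist (polar G) p x <= alpha ->
       hilbert_dist (polar Gplus) p x <= 3 * alpha).
Proof.
move=> [cG [kG iG]] [cK [kK iK]] G0 GK a0 Gplus p x pK xK.
have [B B0 HB] := Kbound kK.
have [r r0 Hr] : exists2 r, 0 < r & forall w, `|w| < r -> G w.
  move/interiorP: G0 => [r r0 H]; exists r => // w wr; apply: H.
  by rewrite sub0r normrN.
have Gne : G !=set0 by exists 0; exact: interior_subset.
have [dpG dpG0 HdpG] := gmin Gne kG GK pK.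
have [dxG dxG0 HdxG] := gmin Gne kG GK xK.
have GGp : G `<=` Gplus.
  move=> g Gg; split; first exact: GK.
  apply: (@le_trans _ _ 0); last exact: ltW.
  have -> : 0 = hilbert_dist K g g by rewrite /hilbert_dist eqxx.
  apply: (ge_inf _); last by exists g.
  exists 0 => _ [g' Gg' <-]; apply: dist_ge0 => //; exact: GK.
have GpK : Gplus `<=` K by move=> w [iw _]; exact: interior_subset.
have HBp : forall w y, Gplus w -> `|dotp w y| <= B * `|y|.
  by move=> w y /GpK; exact: HB.
have HBG : forall w y, G w -> `|dotp w y| <= B * `|y|.
  by move=> w y /GK /interior_subset; exact: HB.
have Hrp : forall w, `|w| < r -> Gplus w by move=> w /Hr /GGp.
set E := expR (2 * (alpha + 1)).
have E0 : 0 < E := expR_gt0 _.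
have dplus : forall q dq, polar K q -> 0 < dq ->
    (forall g, G g -> dq <= 1 - dotp g q) -> forall w, Gplus w -> dq / E <= 1 - dotp w q.
  move=> q dq Kq dq0 Hdq w [iw Hinf].
  set Sw := [set hilbert_dist K w g | g in G].
  have hw : has_inf Sw.
    split; first by case: Gne => g Gg; exists (hilbert_dist K w g), g.
    by exists 0 => _ [g Gg <-]; apply: dist_ge0 => //; exact: GK.
  have [_ [g Gg <-] Hg] := inf_adherent ltr01 hw.
  have [r1 [r2 [r1g [r2g [Er H]]]]] := dK_ratio cK kK iw (GK g Gg).
  have [h1 _] := H q Kq.
  have fw := fpos iw Kq.
  have r1E : r1 <= E.
    apply: (@le_trans _ _ (r1 * r2)); first by nra.
    rewrite Er /E ler_expR; rewrite -/Sw in Hinf; lra.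
  rewrite ler_pdivrMr //; have := Hdq g Gg; nra.
have [->|px] := eqVneq p x.
  by rewrite /hilbert_dist eqxx; split => [|_]; lra.
have [m1 [m1' D1]] := hilbert_polar B0 HBG r0 Hr dpG0 HdpG dxG0 HdxG px.
have [m2 [m2' D2]] := hilbert_polar B0 HBp r0 Hrp (divr_gt0 dpG0 E0)
  (dplus _ _ pK dpG0 HdpG) (divr_gt0 dxG0 E0) (dplus _ _ xK dxG0 HdxG) px.
have key : forall q1 q2, polar K q1 -> polar K q2 -> 0 < mm G q1 q2 ->
    0 < mm Gplus q1 q2 -> ln (mm G q1 q2) - 2 * alpha <= ln (mm Gplus q1 q2).
  move=> q1 q2 K1 K2 mG mGp.
  have lb : lbound [set fr q1 q2 w | w in Gplus] (expR (ln (mm G q1 q2) - 2 * alpha)).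
    move=> _ [w [iw Hw] <-].
    have Hk := key_ln cK kK GK K1 K2 mG Gne iw Hw.
    have P : fr q1 q2 w \in Num.pos.
      by rewrite posrE /fr; apply: divr_gt0; apply: fpos iw _.
    by rewrite -(lnK P) ler_expR.
  have S0 : [set fr q1 q2 w | w in Gplus] !=set0.
    by exists (fr q1 q2 0), 0 => //; apply: Hrp; rewrite normr0.
  have : expR (ln (mm G q1 q2) - 2 * alpha) <= mm Gplus q1 q2 := lb_le_inf S0 lb.
  by rewrite -ler_ln ?posrE ?expR_gt0 // expRK.
have k1 := key p x pK xK m1 m2.
have k2 := key x p xK pK m1' m2'.
rewrite D1 D2; split => [|h]; lra.
Qed.
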